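(* Let $n$ be a natural number with $2^k\le n<2^{k+1}$, and let $G$ be the graph with $n$ vertices obtained as the induced subgraph of the hypercube $Q_{k+1}$ on the vertices whose labels are the $(k+1)$-term binary representations of $0,1,\dots,n-1$. Then for any two vertices $u$ and $v$ of $G$, perfect state transfer from $u$ to $v$ is possible by at most two CQC-hoppings: either there is a spanning subgraph $H$ of $G$ and a time $t_0>0$ with $|\langle v|\exp(-it_0A(H))|u\rangle|=1$, or there exist a vertex $w$ of $G$, spanning subgraphs $H_1,H_2$ of $G$ and times $t_1,t_2>0$ with $|\langle w|\exp(-it_1A(H_1))|u\rangle|=1$ and $|\langle v|\exp(-it_2A(H_2))|w\rangle|=1$.
   Context: The hypercube $Q_m$ is the graph with vertex set $\{0,1\}^m$, two vertices being adjacent if and only if their labels have Hamming distance $1$. A spanning subgraph $H$ of $G$ has $V(H)=V(G)$ and $E(H)\subseteq E(G)$. For a graph $H$ with adjacency matrix $A(H)$, associate to each vertex $x$ the standard basis vector $|x\rangle\in\mathbb{C}^{|V(H)|}$; $H$ has perfect state transfer from $a$ to $b$ at time $t$ if $|\langle b|\exp(-itA(H))|a\rangle|=1$. A CQC-hopping from $a$ to $b$ on $G$ consists of switching off edges of $G$ to obtain a spanning subgraph $H$, performing perfect state transfer from $a$ to $b$ in $H$, and switching the removed edges back on. *)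

(* Defs.v *)
From HB Require Import structures.
From mathcomp Require Import all_boot all_order all_algebra.
From mathcomp Require Import all_classical all_reals all_analysis.
From mathcomp Require Import complex.
Set Implicit Arguments. Unset Strict Implicit. Unset Printing Implicit Defensive.
Import Order.TTheory GRing.Theory Num.Theory.
Local Open Scope ring_scope.

Definition bitn (i m : nat) : bool := odd (m %/ 2 ^ i).

Definition hamming (k u v : nat) : nat :=
  #|[set i : 'I_k.+1 | bitn i u != bitn i v]|.

Definition Gadj (k n : nat) (u v : 'I_n) : bool := hamming k u v == 1%N.

Definition spanning_subgraph (k n : nat) (H : rel 'I_n) : Prop :=
  (forall u v, H u v = H v u) /\ (forall u v, H u v -> Gadj k u v).

Definition adjmx (R : realType) (n : nat) (H : rel 'I_n) : 'M[R]_n :=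
  \matrix_(i, j) (H i j)%:R.

(* real and imaginary parts of the coefficient (-i t)^k / k! *)
Definition re_coef (R : realType) (t : R) (k : nat) : R :=
  if odd k then 0 else (-1) ^+ k./2 * t ^+ k / (k`!)%:R.
Definition im_coef (R : realType) (t : R) (k : nat) : R :=
  if odd k then - ((-1) ^+ k./2 * t ^+ k / (k`!)%:R) else 0.

(* <b| exp(-i t A) |a> = sum_k (-i t)^k/k! (A^k)_{b a}, as a complex number *)
Definition expitA_entry (R : realType) (n : nat) (A : 'M[R]_n) (t : R)
    (b a : 'I_n) : R[i] :=
  (limn (fun N => \sum_(0 <= k < N) re_coef t k * (A ^+ k) b a)
   +i* limn (fun N => \sum_(0 <= k < N) im_coef t k * (A ^+ k) b a))%C.

Definition PST (R : realType) (n : nat) (H : rel 'I_n) (a b : 'I_n) (t : R) : Prop :=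
  `|expitA_entry (adjmx R H) t b a| = 1.

(* Main.v *)
Require Import Defs.
From HB Require Import structures.
From mathcomp Require Import all_boot all_order all_algebra.
From mathcomp Require Import all_classical all_reals all_analysis.
From mathcomp Require Import complex.
From mathcomp Require Import zify.
Import Order.TTheory GRing.Theory Num.Theory.
Set Implicit Arguments. Unset Strict Implicit. Unset Printing Implicit Defensive.

Lemma bitn_sum (f : nat -> bool) K i :
  bitn i (\sum_(0 <= j < K) f j * 2 ^ j)%N = (i < K)%N && f i.
Proof.
elim: K f i => [|K IH] f i.
  by rewrite big_geq // /bitn div0n.
rewrite big_nat_recl // expn0 muln1.
have -> : (\sum_(0 <= j < K) f j.+1 * 2 ^ j.+1 = 2 * \sum_(0 <= j < K) f j.+1 * 2 ^ j)%N.
  by rewrite big_distrr /=; apply: eq_bigr => j _; rewrite expnS mulnCA.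
case: i => [|i].
  rewrite /bitn expn0 divn1 oddD oddM /= addbF.
  by case: (f 0%N).
rewrite /bitn expnS divnMA [(_ + _)%N]addnC [(2 * _)%N]mulnC divnMDl //.
rewrite (divn_small (_ : f 0%N < 2)%N); last by case: (f 0%N).
by rewrite addn0 -/(bitn i _) (IH (fun j => f j.+1)) ltnS.
Qed.

Lemma binexp K m :
  m = (\sum_(0 <= j < K) bitn j m * 2 ^ j + 2 ^ K * (m %/ 2 ^ K))%N.
Proof.
elim: K => [|K IH].
  by rewrite big_geq // expn0 divn1 mul1n.
rewrite big_nat_recr //= -addnA; rewrite {1}IH; congr (_ + _)%N.
rewrite /bitn expnSr divnMA.
set q := (m %/ 2 ^ K)%N.
rewrite {1}(divn_eq q 2) modn2.
case: (odd q) => /=; lia.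
Qed.

Definition bs k (m : nat) : {set 'I_k.+1} := [set i : 'I_k.+1 | bitn i m].
Definition numof k (X : {set 'I_k.+1}) : nat := (\sum_(i in X) 2 ^ i)%N.

Lemma numof_nat k (X : {set 'I_k.+1}) :
  numof X = (\sum_(0 <= j < k.+1) (inord j \in X) * 2 ^ j)%N.
Proof.
rewrite /numof big_mkord big_mkcond /=; apply: eq_bigr => i _.
by rewrite inord_val; case: (i \in X); rewrite ?mul1n ?mul0n.
Qed.

Lemma bs_numof k (X : {set 'I_k.+1}) : bs k (numof X) = X.
Proof.
by apply/setP => i; rewrite inE numof_nat bitn_sum ltn_ord inord_val.
Qed.

Lemma numof_bs k m : (m < 2 ^ k.+1)%N -> numof (bs k m) = m.
Proof.
move=> hm; rewrite numof_nat [in RHS](binexp k.+1 m) divn_small // muln0 addn0.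
apply: eq_big_nat => j /andP [_ hj].
by rewrite inE inordK.
Qed.

Lemma numof_sub k (X Y : {set 'I_k.+1}) : X \subset Y -> (numof X <= numof Y)%N.
Proof.
move=> /fintype.subsetP sXY; rewrite /numof [X in (_ <= X)%N](bigID (mem X)) /=.
have -> : (\sum_(i in X) 2 ^ i = \sum_(i in Y | i \in X) 2 ^ i)%N.
  by apply: eq_bigl => i; rewrite andb_idl //; exact: sXY.
exact: leq_addr.
Qed.

From mathcomp Require Import ring lra.
Import numFieldNormedType.Exports.
Local Open Scope ring_scope.

Definition flip k (Y : {set 'I_k.+1}) (j : 'I_k.+1) : {set 'I_k.+1} :=
  [set i | (i \in Y) != (i == j)].

Definition sgw (R : realType) k (S Q Y : {set 'I_k.+1}) : R :=
  \prod_i (if i \in Q then ((i \in S)%:R * (if i \in Y then -1 else 1)) else 1).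

Definition lam (R : realType) k (S Q : {set 'I_k.+1}) : R :=
  \sum_(i in S) (if i \in Q then -1 else 1).

Definition phi (R : realType) k (S : {set 'I_k.+1}) (kk : nat) (Y : {set 'I_k.+1}) : R :=
  \sum_Q sgw R S Q Y * lam R S Q ^+ kk.

Lemma sgw_flip (R : realType) k (S Q Y : {set 'I_k.+1}) j :
  sgw R S Q (flip Y j) = sgw R S Q Y * (if j \in Q then -1 else 1).
Proof.
rewrite /sgw; case hj: (j \in Q).
  rewrite (bigD1 j) //= [in RHS](bigD1 j) //= hj.
  have -> : \prod_(i | i != j) (if i \in Q then (i \in S)%:R * (if i \in flip Y j then -1 else 1) else 1)
         = \prod_(i | i != j) (if i \in Q then (i \in S)%:R * (if i \in Y then -1 else 1) else 1) :> R.
    by apply: eq_bigr => i /negbTE hij; rewrite inE hij; case: (i \in Y).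
  rewrite inE eqxx; case: (j \in Y) => /=; ring.
rewrite mulr1; apply: eq_bigr => i _; case hi: (i \in Q) => //.
have hij : (i == j) = false by apply/negbTE; apply: contraFN hj => /eqP <-.
by rewrite inE hij; case: (i \in Y).
Qed.

Lemma phi_step (R : realType) k (S Y : {set 'I_k.+1}) kk :
  \sum_(j in S) phi R S kk (flip Y j) = phi R S kk.+1 Y.
Proof.
rewrite /phi exchange_big /=; apply: eq_bigr => Q _.
under eq_bigr do rewrite sgw_flip.
rewrite -big_distrl /= -big_distrr /= -/(lam R S Q) exprS; ring.
Qed.

Lemma phi0 (R : realType) k (S Y : {set 'I_k.+1}) :
  phi R S 0 Y = \prod_i ((i \in S)%:R * (if i \in Y then -1 else 1) + 1).
Proof.
rewrite bigA_distr /phi; apply: eq_bigr => Q _; rewrite expr0 mulr1.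
by [].
Qed.

Definition inC k (a b x : nat) : bool :=
  (bs k a \subset bs k x) && (bs k x \subset bs k b).
Definition Hc k n (a b : nat) : rel 'I_n :=
  fun x y => [&& inC k a b x, inC k a b y & Gadj k x y].

Lemma bs_inj k n (hn : (n <= 2 ^ k.+1)%N) (x y : 'I_n) : bs k x = bs k y -> x = y.
Proof.
move=> h; apply: val_inj => /=.
rewrite -(numof_bs (leq_trans (ltn_ord x) hn)) -(numof_bs (leq_trans (ltn_ord y) hn)).
by rewrite h.
Qed.

Lemma hamset_flip k (x y : nat) j :
  ([set i : 'I_k.+1 | bitn i x != bitn i y] == [set j]) = (bs k y == flip (bs k x) j).
Proof.
apply/eqP/eqP => h; apply/setP => i; move/setP: h => /(_ i); rewrite !inE.
  by case: (bitn i x); case: (bitn i y); case: (i == j).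
by move=> ->; case: (bitn i x); case: (i == j).
Qed.

Lemma flipE k (Y : {set 'I_k.+1}) j i : (i \in flip Y j) = ((i \in Y) != (i == j)).
Proof. by rewrite /flip inE. Qed.

Lemma hamset_flip_card k (x y : nat) j : bs k y = flip (bs k x) j ->
  #|[set i : 'I_k.+1 | bitn i x != bitn i y]| == 1%N.
Proof. by move=> h; apply/cards1P; exists j; apply/eqP; rewrite hamset_flip h. Qed.

Lemma flip_in k (a b x : nat) j :
  inC k a b x -> j \in bs k b :\: bs k a ->
  (bs k a \subset flip (bs k x) j) && (flip (bs k x) j \subset bs k b).
Proof.
move=> /andP [/fintype.subsetP hax /fintype.subsetP hxb]; rewrite finset.in_setD => /andP [hja hjb].
apply/andP; split; apply/fintype.subsetP => i; rewrite flipE.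
  move=> hi; have -> : (i == j) = false.
    by apply/negbTE; apply: contraNneq hja => <-.
  by rewrite (hax _ hi).
case hij: (i == j); first by rewrite (eqP hij) hjb.
by case: (i \in bs k x) (hxb i) => //= ->.
Qed.

Lemma nbr_sum (R : realType) k n (hn : (n <= 2 ^ k.+1)%N) (a b x : 'I_n)
  (hx : inC k a b x) (F : {set 'I_k.+1} -> R) :
  \sum_(y : 'I_n) (@Hc k n a b x y)%:R * F (bs k y)
  = \sum_(j in bs k b :\: bs k a) F (flip (bs k x) j).
Proof.
set S := bs k b :\: bs k a.
transitivity (\sum_(j in S) \sum_(y : 'I_n) (bs k y == flip (bs k x) j)%:R * F (bs k y)).
  rewrite exchange_big /=; apply: eq_bigr => y _; rewrite -big_distrl /=; congr (_ * _).
  case hH: (@Hc k n a b x y).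
    move: hH; rewrite /Hc hx /= => /andP [hy].
    rewrite /Gadj /hamming => /cards1P [j0 hj0].
    have hfl : bs k y = flip (bs k x) j0 by apply/eqP; rewrite -hamset_flip hj0.
    have hj0S : j0 \in S.
      move/setP: hj0 => /(_ j0); rewrite !inE eqxx.
      move: hx hy => /andP [/fintype.subsetP hax /fintype.subsetP hxb] /andP [/fintype.subsetP hay /fintype.subsetP hyb].
      case hbx: (bitn j0 x); case hby: (bitn j0 y) => //= _.
        apply/andP; split; last by move: (hxb j0); rewrite !inE hbx => ->.
        by apply/negP => ha; move: (hay j0); rewrite !inE ha hby => /(_ isT).
      apply/andP; split; last by move: (hyb j0); rewrite !inE hby => ->.
      by apply/negP => ha; move: (hax j0); rewrite !inE ha hbx => /(_ isT).
    rewrite (bigD1 j0) //= hfl eqxx big1 ?addr0 // => j /andP [_ hj].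
    case: eqP => // /setP /(_ j); rewrite !flipE eqxx (negbTE hj).
    by case: (j \in bs k x).
  rewrite big1 // => j hj; case: eqP => // hfl; exfalso; move: hH.
  rewrite /Hc hx /=.
  have -> : inC k a b y by rewrite /inC hfl; exact: flip_in.
  by rewrite /Gadj /hamming /= (hamset_flip_card hfl).
apply: eq_bigr => j hj.
have hlt : (numof (flip (bs k x) j) < n)%N.
  have /andP [_ hsub] := flip_in hx hj.
  apply: leq_ltn_trans (numof_sub hsub) _.
  by rewrite numof_bs ?ltn_ord // (leq_trans (ltn_ord b) hn).
set y0 : 'I_n := insubd a (numof (flip (bs k x) j)).
have hy0 : bs k y0 = flip (bs k x) j by rewrite val_insubd hlt bs_numof.
rewrite (bigD1 y0) //= hy0 eqxx mul1r big1 ?addr0 // => y hy.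
case: eqP; last by rewrite mul0r.
by rewrite -hy0 => /(bs_inj hn) /eqP; rewrite (negbTE hy).
Qed.

Lemma c_gt0 (R : realType) k (a b : nat) :
  0 < phi R (bs k b :\: bs k a) 0 (bs k a).
Proof.
rewrite phi0; apply: prodr_gt0 => i _.
case hi: (i \in bs k b :\: bs k a) => /=.
  move: hi; rewrite finset.in_setD => /andP [/negbTE -> _]; rewrite mul1r; lra.
rewrite mul0r add0r; lra.
Qed.

Lemma A_pow (R : realType) k n (hn : (n <= 2 ^ k.+1)%N) (a b : 'I_n)
  (hab : bs k a \subset bs k b) kk (x : 'I_n) :
  (adjmx R (@Hc k n a b) ^+ kk) x a
  = (inC k a b x)%:R * phi R (bs k b :\: bs k a) kk (bs k x)
    / phi R (bs k b :\: bs k a) 0 (bs k a).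
Proof.
set S := bs k b :\: bs k a.
have cne0 : phi R S 0 (bs k a) != 0 by rewrite gt_eqF // c_gt0.
elim: kk x => [|kk IH] x.
  rewrite expr0 mxE.
  case: (eqVneq x a) => [-> | hxa].
    by rewrite /= /inC subxx hab /= mul1r divff.
  rewrite /= mulr0n.
  case hx: (inC k a b x); last by rewrite !mul0r.
  have hne : bs k a != bs k x.
    by apply: contra_neq hxa => /(bs_inj hn) ->.
  move: (hx) => /andP [hax hxb].
  have : bs k a \proper bs k x by rewrite finset.properEneq hne hax.
  case/fintype.properP => _ [j hjx hja].
  have hjS : j \in S.
    by rewrite finset.in_setD hja /=; exact: (fintype.subsetP hxb).
  by rewrite phi0 (bigD1 j) //= hjS hjx /= !mul1r addNr !mul0r.
rewrite exprS -mulmxE mxE.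
case hx: (inC k a b x).
  transitivity (\sum_(y : 'I_n) (@Hc k n a b x y)%:R *
                 (phi R S kk (bs k y) / phi R S 0 (bs k a))).
    apply: eq_bigr => y _; rewrite mxE IH.
    case hH: (@Hc k n a b x y); last by rewrite !mul0r.
    move: hH; rewrite /Hc /= => /andP [_ /andP [hy _]].
    by rewrite hy /= !mul1r.
  rewrite (@nbr_sum R k n hn a b x hx (fun Y => phi R S kk Y / phi R S 0 (bs k a))) //.
  by rewrite -big_distrl /= phi_step mul1r.
rewrite mul0r mul0r big1 // => y _.
by rewrite mxE /Hc hx /= mul0r.
Qed.

Lemma re_coefE (R : realType) (t l : R) kk :
  re_coef t kk * l ^+ kk = cos_coeff (l * t) kk.
Proof.
rewrite /re_coef /cos_coeff /=; case: (odd kk) => /=; first by rewrite !mul0r.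
rewrite exprMn -exprnP; ring.
Qed.

Lemma im_coefE (R : realType) (t l : R) kk :
  im_coef t kk * l ^+ kk = - sin_coeff (l * t) kk.
Proof.
rewrite /im_coef /sin_coeff /=; case ho: (odd kk) => /=; last by rewrite !mul0r oppr0.
have -> : kk.-1./2 = kk./2.
  by move: ho; case: kk => // m /=; rewrite uphalf_half => /negbTE ->.
rewrite exprMn; ring.
Qed.

Lemma cos_cvg (R : realType) (x : R) : (series (cos_coeff x) @ \oo --> cos x)%classic.
Proof. rewrite unlock; exact: is_cvg_series_cos_coeff. Qed.

Lemma sin_cvg (R : realType) (x : R) : (series (sin_coeff x) @ \oo --> sin x)%classic.
Proof. rewrite unlock; exact: is_cvg_series_sin_coeff. Qed.

Lemma cvg_wsum (R : realType) (I : finType) (w : I -> R) (f : I -> nat -> R) (L : I -> R) :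
  (forall i, f i @ \oo --> L i)%classic ->
  ((fun N => \sum_i w i * f i N) @ \oo --> \sum_i w i * L i)%classic.
Proof.
move=> hf.
apply: (@cvg_big R I +%R 0 xpredT (@pseudometric_normed_Zmodule.add_continuous R R) nat (\oo)%classic
   (index_enum I) (fun i N => w i * f i N) (fun i => w i * L i) _).
move=> i _; apply: cvgMr; exact: hf.
Qed.

Local Open Scope complex_scope.

Lemma sum_complex (R : realType) (I : finType) (f g : I -> R) :
  \sum_i (f i +i* g i) = (\sum_i f i) +i* (\sum_i g i).
Proof.
elim: (index_enum I) => [|x r IH]; first by rewrite !big_nil.
by rewrite !big_cons IH.
Qed.

Lemma mulC_real (R : realType) (r a b : R) : r%:C * (a +i* b) = (r * a) +i* (r * b).
Proof. by simpc; congr (_ +i* _); ring. Qed.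

Lemma entry_val (R : realType) k n (hn : (n <= 2 ^ k.+1)%N) (a b : 'I_n)
  (hab : bs k a \subset bs k b) (t : R) :
  expitA_entry (adjmx R (@Hc k n a b)) t b a
  = \sum_Q ((sgw R (bs k b :\: bs k a) Q (bs k b) / phi R (bs k b :\: bs k a) 0 (bs k a))%:C
       * (cos (lam R (bs k b :\: bs k a) Q * t) +i* - sin (lam R (bs k b :\: bs k a) Q * t))).
Proof.
set S := bs k b :\: bs k a.
set c := phi R S 0 (bs k a).
have hb : inC k a b b by rewrite /inC hab subxx.
have hA : forall kk, (adjmx R (@Hc k n a b) ^+ kk) b a
    = \sum_Q (sgw R S Q (bs k b) / c) * lam R S Q ^+ kk.
  move=> kk; rewrite A_pow // hb mul1r /phi mulr_suml; apply: eq_bigr => Q _.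
  rewrite /c; ring.
under eq_bigr do rewrite mulC_real.
rewrite sum_complex /expitA_entry; congr (_ +i* _).
  apply: (cvg_lim (@Rhausdorff R)).
  have -> : (fun N => \sum_(0 <= kk < N) re_coef t kk * (adjmx R (@Hc k n a b) ^+ kk) b a)
      = (fun N => \sum_Q (sgw R S Q (bs k b) / c) * series (cos_coeff (lam R S Q * t)) N).
    apply/funext => N; under eq_bigr do rewrite hA mulr_sumr.
    rewrite exchange_big /=; apply: eq_bigr => Q _; rewrite /series /= mulr_sumr.
    by apply: eq_bigr => kk _; rewrite -re_coefE; ring.
  have h := (@cvg_wsum R _ (fun Q => sgw R S Q (bs k b) / c)
     (fun Q => series (cos_coeff (lam R S Q * t))) (fun Q => cos (lam R S Q * t))
     (fun Q => @cos_cvg R (lam R S Q * t))). exact h.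
apply: (cvg_lim (@Rhausdorff R)).
have -> : (fun N => \sum_(0 <= kk < N) im_coef t kk * (adjmx R (@Hc k n a b) ^+ kk) b a)
    = (fun N => \sum_Q (sgw R S Q (bs k b) / c) * (- series (sin_coeff (lam R S Q * t)) N)).
  apply/funext => N; under eq_bigr do rewrite hA mulr_sumr.
  rewrite exchange_big /=; apply: eq_bigr => Q _; rewrite /series /= -sumrN mulr_sumr.
  by apply: eq_bigr => kk _; rewrite -im_coefE; ring.
exact: (@cvg_wsum R _ (fun Q => sgw R S Q (bs k b) / c)
     (fun Q N => - series (sin_coeff (lam R S Q * t)) N) (fun Q => - sin (lam R S Q * t))
     (fun Q => cvgN (@sin_cvg R (lam R S Q * t)))).
Qed.

Definition Ec (R : realType) (t l : R) : R[i] := cos (l * t) +i* - sin (l * t).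

Lemma Ec_add (R : realType) (t l1 l2 : R) : Ec t (l1 + l2) = Ec t l1 * Ec t l2.
Proof. by rewrite /Ec mulrDl cosD sinD; simpc; congr (_ +i* _); ring. Qed.

Lemma Ec0 (R : realType) (t : R) : Ec t 0 = 1.
Proof. by rewrite /Ec mul0r cos0 sin0 oppr0. Qed.

Lemma hop_norm (R : realType) k n (hn : (n <= 2 ^ k.+1)%N) (a b : 'I_n)
  (hab : bs k a \subset bs k b) :
  `|expitA_entry (adjmx R (@Hc k n a b)) (pi / 2) b a| = 1.
Proof.
rewrite entry_val //.
set S := bs k b :\: bs k a.
set c := phi R S 0 (bs k a).
set t : R := pi / 2.
have cgt0 : 0 < c by exact: c_gt0.
pose u i : R := (i \in S)%:R * (if i \in bs k b then -1 else 1).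
pose A i : R[i] := (u i)%:C * (if i \in S then Ec t (-1) else 1).
pose B i : R[i] := if i \in S then Ec t 1 else 1.
transitivity `|(c^-1)%:C * \prod_i (A i + B i)|.
  congr (`| _ |); rewrite bigA_distr big_distrr /=; apply: eq_bigr => Q _.
  rewrite -/(Ec t _) /lam (big_morph (Ec t) (@Ec_add R t) (Ec0 t)).
  rewrite [sgw _ _ _ _ / c]mulrC rmorphM /= -mulrA; congr (_ * _).
  rewrite /sgw rmorph_prod /= [X in _ * X]big_mkcond /= -big_split /=; apply: eq_bigr => i _.
  rewrite /A /B; case: (i \in Q) => /= //.
  by rewrite -[1%:C]/(1 : R[i]) mul1r.
rewrite normrM normr_prod.
have hc : c = \prod_i (if i \in S then 2 else 1).
  rewrite /c phi0; apply: eq_bigr => i _.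
  case hi: (i \in S) => /=; last by rewrite mul0r add0r.
  move: hi; rewrite /S finset.in_setD => /andP [/negbTE -> _]; rewrite mul1r.
  by [].
have hAB : forall i, `|A i + B i| = (if i \in S then 2 else 1)%:C.
  move=> i; rewrite /A /B /u.
  case hi: (i \in S) => /=; last by rewrite mul0r rmorph0 mul0r add0r normr1.
  have -> : i \in bs k b by move: hi; rewrite /S finset.in_setD => /andP [].
  rewrite /Ec mul1r mulN1r cosN sinN opprK cos_pihalf sin_pihalf.
  rewrite normc_def /=.
  set z := (X in Num.sqrt X).
  have -> : z = (2 : R) ^+ 2 by rewrite /z; ring.
  by rewrite sqrtr_sqr ger0_norm.
under eq_bigr do rewrite hAB.
rewrite -rmorph_prod -hc ger0_norm; last by rewrite ler0c invr_ge0 ltW.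
by rewrite -rmorphM mulVf ?gt_eqF.
Qed.

Lemma trmxX (R : realType) n (M : 'M[R]_n) kk : (M^T) ^+ kk = (M ^+ kk)^T.
Proof.
elim: kk => [|kk IH]; first by rewrite !expr0 trmx1.
by rewrite exprS IH exprSr -!mulmxE trmx_mul.
Qed.

Lemma entry_sym (R : realType) n (H : rel 'I_n) (hs : forall u v, H u v = H v u)
  (t : R) (a b : 'I_n) :
  expitA_entry (adjmx R H) t a b = expitA_entry (adjmx R H) t b a.
Proof.
have hT : (adjmx R H)^T = adjmx R H by apply/matrixP => i j; rewrite !mxE hs.
have hk : forall kk, (adjmx R H ^+ kk) a b = (adjmx R H ^+ kk) b a.
  by move=> kk; rewrite -[in LHS]hT trmxX mxE.
rewrite /expitA_entry.
rewrite (_ : (fun N => \sum_(0 <= k < N) re_coef t k * (adjmx R H ^+ k) a b)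
           = (fun N => \sum_(0 <= k < N) re_coef t k * (adjmx R H ^+ k) b a)); last first.
  by apply/funext => N; apply: eq_bigr => kk _; rewrite hk.
rewrite (_ : (fun N => \sum_(0 <= k < N) im_coef t k * (adjmx R H ^+ k) a b)
           = (fun N => \sum_(0 <= k < N) im_coef t k * (adjmx R H ^+ k) b a)) //.
by apply/funext => N; apply: eq_bigr => kk _; rewrite hk.
Qed.

Lemma Hc_span k n (a b : nat) : spanning_subgraph k (@Hc k n a b).
Proof.
split.
  move=> x y; rewrite /Hc /Gadj /hamming.
  have -> : [set i : 'I_k.+1 | bitn i x != bitn i y] = [set i : 'I_k.+1 | bitn i y != bitn i x].
    by apply/setP => i; rewrite !inE eq_sym.
  by rewrite andbCA.
by move=> x y /and3P [].
Qed.

Unset Implicit Arguments.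
Local Close Scope complex_scope.

Theorem mainTheorem7 (R : realType) (k n : nat)
  (hlo : (2 ^ k <= n)%N) (hhi : (n < 2 ^ k.+1)%N) (u v : 'I_n) :
  (exists (H : rel 'I_n) (t0 : R),
      spanning_subgraph k H /\ 0 < t0 /\ PST H u v t0)
  \/
  (exists (w : 'I_n) (H1 H2 : rel 'I_n) (t1 t2 : R),
      [/\ spanning_subgraph k H1, spanning_subgraph k H2,
          0 < t1, 0 < t2 & PST H1 u w t1 /\ PST H2 w v t2]).
Proof.
right.
have hn : (n <= 2 ^ k.+1)%N := ltnW hhi.
have hlt : (numof (bs k u :&: bs k v) < n)%N.
  apply: leq_ltn_trans (numof_sub (subsetIl _ _)) _.
  by rewrite numof_bs ?ltn_ord // (leq_trans (ltn_ord u) hn).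
set w : 'I_n := insubd u (numof (bs k u :&: bs k v)).
have hw : bs k w = bs k u :&: bs k v by rewrite val_insubd hlt bs_numof.
have hpi : 0 < pi / 2 :> R by rewrite divr_gt0 ?pi_gt0.
exists w, (@Hc k n w u), (@Hc k n w v), (pi / 2), (pi / 2).
split => //; try exact: Hc_span.
split.
  rewrite /PST entry_sym; last by case: (Hc_span k n w u).
  by apply: hop_norm => //; rewrite hw subsetIl.
by apply: hop_norm => //; rewrite hw subsetIr.
Qed.
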